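(* Let $\mathcal N=\{N_1,\ldots,N_\ell\}$ ($\ell\ge4$) be a family of $k$-sets satisfying properties (i) and (ii) below, and fix any run of the decomposition process described in the context. Let $0\le j\le t$, $1\le i\le\ell_j$, and $Y\subseteq N_i$ with $|Y|\le j$. Then there exists a private pair $p\subseteq N_i\setminus Y$ for $N_i$ at time $j$ such that either $p$ is a subset of some $3$-element set $C\subseteq\bigl(N_i\cup\{a_i^{(0)},\dots,a_i^{(j)}\}\bigr)\setminus Y$ satisfying $C\cap(V\setminus N_r)\neq\varnothing$ for all $r=1,\dots,\ell$, or $p$ contains a vertex that is private for $N_i$ at time $j$.
   Context: Setting: $k\ge3$, $\mathcal N=\{N_1,\dots,N_\ell\}$ a family of $k$-subsets, $V=\bigcup N_i$, $n=|V|$, $m=n-k$, satisfying (i) $\bigcap_{i}N_i=\varnothing$ but $\bigcap_{j\ne i}N_j\ne\varnothing$ for all $i$; (ii) every $S\subseteq V$ with $|S|\ge k+1$ contains a $3$-set $T$ not contained in any $N_i$. Assume $\ell\ge4$. Decomposition process: Stage $0$: $\ell_0=\ell$; for each $i\le\ell_0$ choose $a_i^{(0)}\in\bigcap_{r\ne i}N_r$; kernel $A^{(0)}=\{a_1^{(0)},\dots,a_{\ell_0}^{(0)}\}$. Having defined stages $0,\dots,j$ (with surviving sets $N_1,\dots,N_{\ell_j}$, $\ell_j\ge4$, and kernels $A^{(0)},\dots,A^{(j)}$), consider $R^{(j)}=\{N_r\setminus\bigcup_{s\le j}A^{(s)} : r\le\ell_j\}$, which has empty intersection. If every subfamily of $R^{(j)}$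 minimal with respect to having empty intersection has only $2$ or $3$ members, stop and set $t=j$. Otherwise choose such a minimal subfamily with at least $4$ members; after reindexing assume it consists of the truncations $N_r^{(j+1)}=N_r\setminus\bigcup_{s\le j}A^{(s)}$, $r\le\ell_{j+1}$; choose $a_i^{(j+1)}\in\bigcap_{r\le\ell_{j+1},r\ne i}N_r^{(j+1)}$ for $i\le\ell_{j+1}$, and let $A^{(j+1)}$ be the set of these. Privacy: for $i\le\ell_j$, a vertex $v\in N_i$ is private for $N_i$ at time $j$ if no $N_r$ with $r\le\ell_j$, $r\ne i$, contains $v$; a $2$-set $p\subseteq N_i$ is a private pair for $N_i$ at time $j$ if no $N_r$ with $r\le\ell_j$, $r\neq i$, contains $p$. *)

(* Defs.v *)
From mathcomp Require Import all_boot.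
Set Implicit Arguments. Unset Strict Implicit. Unset Printing Implicit Defensive.

Section Defs.
Variables (T : finType) (l : nat) (N : 'I_l -> {set T}).

Definition Vset : {set T} := \bigcup_(i < l) N i.

Definition prop_i : Prop :=
  \bigcap_(i < l) N i = set0 /\
  forall i : 'I_l, \bigcap_(r < l | r != i) N r != set0.

Definition prop_ii (k : nat) : Prop :=
  forall S : {set T}, S \subset Vset -> k.+1 <= #|S| ->
    exists T3 : {set T}, [/\ T3 \subset S, #|T3| = 3 &
      forall i : 'I_l, ~~ (T3 \subset N i)].

(* Instead of reindexing, the surviving
   sets at stage j are described by the set [Sv j] of their ORIGINAL indices
   (so ell_j = #|Sv j|), and [a j i] is the kernel vertex a_i^{(j)} for
   i \in Sv j. *)
Definition kernel (Sv : nat -> {set 'I_l}) (a : nat -> 'I_l -> T) (s : nat)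
  : {set T} := [set a s i | i in Sv s].

Definition trunc (Sv : nat -> {set 'I_l}) (a : nat -> 'I_l -> T) (j : nat)
  (r : 'I_l) : {set T} := N r :\: \bigcup_(0 <= s < j) kernel Sv a s.

Definition minimal_empty (R : 'I_l -> {set T}) (Sj F : {set 'I_l}) : Prop :=
  [/\ F \subset Sj, \bigcap_(r in F) R r = set0 &
      forall F' : {set 'I_l}, F' \proper F -> \bigcap_(r in F') R r != set0].

Definition decomposition_run (t : nat) (Sv : nat -> {set 'I_l})
  (a : nat -> 'I_l -> T) : Prop :=
  [/\ Sv 0 = [set: 'I_l],
      (forall j, j <= t -> forall i, i \in Sv j ->
         forall r, r \in Sv j -> r != i -> a j i \in trunc Sv a j r),
      (* continuation: for j < t, stage j+1 keeps a minimal subfamily of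
         R^(j) = truncations at stage j+1, with at least 4 members *)
      (forall j, j < t ->
         minimal_empty (trunc Sv a j.+1) (Sv j) (Sv j.+1) /\ 4 <= #|Sv j.+1|) &
      (forall F, minimal_empty (trunc Sv a t.+1) (Sv t) F ->
         #|F| = 2 \/ #|F| = 3)].

Definition private_vertex (Sv : nat -> {set 'I_l}) (j : nat) (i : 'I_l)
  (v : T) : Prop :=
  v \in N i /\ forall r, r \in Sv j -> r != i -> v \notin N r.

Definition private_pair (Sv : nat -> {set 'I_l}) (j : nat) (i : 'I_l)
  (p : {set T}) : Prop :=
  [/\ #|p| = 2, p \subset N i &
      forall r, r \in Sv j -> r != i -> ~~ (p \subset N r)].

End Defs.

(* Main.v *)
Require Import Defs.
From mathcomp Require Import all_boot zify.

Lemma mem_bigcup_seq (T : finType) (F : nat -> {set T}) (r : seq nat) s x :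
  s \in r -> x \in F s -> x \in \bigcup_(i <- r) F i.
Proof.
elim: r => // h r IH; rewrite inE big_cons in_setU => /orP[/eqP<-|hs] hx.
  by rewrite hx.
by rewrite IH ?orbT.
Qed.

Lemma pick_other (I : finType) (A : {set I}) x : 2 <= #|A| -> exists y, y \in A /\ y != x.
Proof.
move=> h; have : 0 < #|A :\ x|.
  by move: h; rewrite (cardsD1 x A); case: (x \in A) => //= h; apply: leq_trans h.
move=> /card_gt0P [y]; rewrite !inE => /andP[hyx hy]; by exists y.
Qed.

Theorem lemma5 (T : finType) (k l : nat) (N : 'I_l -> {set T})
  (t : nat) (Sv : nat -> {set 'I_l}) (a : nat -> 'I_l -> T) :
  3 <= k -> 4 <= l ->
  (forall i, #|N i| = k) ->
  prop_i N -> prop_ii N k ->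
  decomposition_run N t Sv a ->
  forall (j : nat) (i : 'I_l) (Y : {set T}),
    j <= t -> i \in Sv j -> Y \subset N i -> #|Y| <= j ->
    exists p : {set T},
      [/\ private_pair N Sv j i p, p \subset N i :\: Y &
        (exists C : {set T},
            [/\ #|C| = 3, p \subset C,
                C \subset (N i :|: [set a s i | s : 'I_j.+1]) :\: Y &
                forall r : 'I_l, C :&: (Vset N :\: N r) != set0])
        \/ (exists2 v, v \in p & private_vertex N Sv j i v)].
Proof.
move=> hk hl hcard [hI1 hI2] hII [Sv0 Hker Hcont Hstop] j i Y hjt hij hYi hYj.
have F0 : forall d s, s + d <= t -> Sv (s + d) \subset Sv s.
  elim=> [|d IH] s hs; first by rewrite addn0.
  rewrite addnS; apply: subset_trans (IH s _); last by apply: ltnW; rewrite -addnS.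
  by case: (Hcont (s + d) _) => [|[]//]; rewrite -addnS.
have F0' : forall s, s <= j -> Sv j \subset Sv s.
  move=> s hs; rewrite -(subnKC hs); apply: F0; by rewrite subnKC.
have F1 : forall s, s <= t -> 4 <= #|Sv s|.
  case=> [|s] hs; first by rewrite Sv0 cardsT card_ord.
  by case: (Hcont s hs).
have Emp : forall s, s <= t -> \bigcap_(r in Sv s) trunc N Sv a s r = set0.
  case=> [|s] hs.
    rewrite Sv0 -hI1; apply: eq_big => [r|r _]; first by rewrite in_setT.
    by rewrite /trunc big_geq // setD0.
  by case: (Hcont s hs) => [[]].
have Oth : forall s x, s <= t -> exists r, r \in Sv s /\ r != x.
  move=> s x hs; apply: pick_other; by apply: leq_trans (F1 s hs).
have F3 : forall s x r, s <= t -> x \in Sv s -> r \in Sv s -> r != x -> a s x \in N r.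
  move=> s x r hs hx hr hrx; by move: (Hker s hs x hx r hr hrx); rewrite inE => /andP[].
have F2 : forall s x, s <= t -> x \in Sv s -> a s x \notin N x.
  move=> s x hs hx; apply/negP => hN.
  have : a s x \in \bigcap_(r in Sv s) trunc N Sv a s r.
    apply/bigcapP => r hr; case: (eqVneq r x) => [->|ne]; last exact: Hker.
    case: (Oth s x hs) => r' [hr' hr'x].
    move: (Hker s hs x hx r' hr' hr'x); rewrite !inE hN => /andP[-> _] //.
  by rewrite Emp // inE.
have F4 : forall s s' x y, s < s' -> s' <= t -> x \in Sv s -> y \in Sv s' -> a s x != a s' y.
  move=> s s' x y hss hs' hx hy; apply/eqP => e.
  case: (Oth s' y hs') => r [hr hry].
  move: (Hker s' hs' y hy r hr hry); rewrite inE -e => /andP[/negP []].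
  apply: (@mem_bigcup_seq _ _ _ s); first by rewrite mem_index_iota.
  exact: imset_f.

have hAi : forall s, s <= j -> i \in Sv s.
  by move=> s hs; apply: (subsetP (F0' s hs)).
have Inj : forall x, x \in Sv j -> injective (fun s : 'I_j.+1 => a s x).
  move=> x hx s1 s2 /= e; apply: val_inj => /=.
  have h1 : s1 <= j by rewrite -ltnS.
  have h2 : s2 <= j by rewrite -ltnS.
  case: (ltngtP s1 s2) => // lt.
    have := F4 s1 s2 x x lt (leq_trans h2 hjt) (subsetP (F0' _ h1) _ hx) (subsetP (F0' _ h2) _ hx).
    by rewrite e eqxx.
  have := F4 s2 s1 x x lt (leq_trans h1 hjt) (subsetP (F0' _ h2) _ hx) (subsetP (F0' _ h1) _ hx).
  by rewrite e eqxx.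
set A := [set a s i | s : 'I_j.+1].
have cardA : #|A| = j.+1 by rewrite card_imset ?card_ord //; exact: Inj.
have hAN : forall x, x \in A -> x \notin N i.
  move=> x /imsetP [s _ ->]; have hs : s <= j by rewrite -ltnS.
  apply: F2; [exact: leq_trans hs hjt | exact: hAi].
have hYN : forall x, x \in Y -> x \in N i by apply/subsetP.
set S := (N i :|: A) :\: Y.
have eS : S = (N i :\: Y) :|: A.
  apply/setP => x; rewrite !inE; case hxA: (x \in A); last by rewrite !orbF.
  have := hAN x hxA; case hxY: (x \in Y) => //; by rewrite hYN.
have hYk : #|Y| <= k by rewrite -(hcard i); apply: subset_leq_card.
have cardS : k.+1 <= #|S|.
  rewrite eS cardsU cardsD cardA hcard (setIidPr hYi).
  have -> : (N i :\: Y) :&: A = set0.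
    apply/setP => x; rewrite !inE; case hxA: (x \in A); last by rewrite andbF.
    by rewrite (negbTE (hAN x hxA)) andbF.
  rewrite cards0 subn0; lia.
have hAV : forall s : 'I_j.+1, exists2 r, r \in Sv j & (r != i) && (a s i \in N r).
  move=> s; case: (Oth j i hjt) => r [hr hri]; exists r => //; rewrite hri /=.
  have hs : s <= j by rewrite -ltnS.
  apply: F3; [exact: leq_trans hjt|exact: hAi|exact: (subsetP (F0' _ hs))|done].
have hSV : S \subset Vset N.
  apply/subsetP => x; rewrite eS !inE => /orP[/andP[_ hx]|/imsetP[s _ ->]].
    by apply/bigcupP; exists i.
  case: (hAV s) => r _ /andP[_ hr]; by apply/bigcupP; exists r.
case: (hII S hSV cardS) => C [hCS hC3 hCN].
have hCV : forall r, C :&: (Vset N :\: N r) != set0.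
  move=> r; case/subsetPn: (hCN r) => x hxC hxr; apply/set0Pn; exists x.
  by rewrite !inE hxC hxr (subsetP hSV) // (subsetP hCS).
have Claim : forall r, r \in Sv j -> r != i -> exists2 x, x \in C :&: (N i :\: Y) & x \notin N r.
  move=> r hr hri; case/subsetPn: (hCN r) => x hxC hxr; exists x => //.
  move: (subsetP hCS x hxC); rewrite eS !inE hxC /= => /orP[//|/imsetP[s _ e]].
  have hs : s <= j by rewrite -ltnS.
  move: hxr; rewrite e F3 //; [exact: leq_trans hjt|exact: hAi|exact: (subsetP (F0' _ hs))].
set D := C :&: (N i :\: Y).
have hDN : D \subset N i :\: Y by apply: subsetIr.
have hDC : D \subset C by apply: subsetIl.
have D0 : 0 < #|D|.
  case: (Oth j i hjt) => r [hr hri]; case: (Claim r hr hri) => x hx _.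
  by apply/card_gt0P; exists x.
have D3 : #|D| < 3.
  have hle : #|D| <= 3 by rewrite -hC3; apply: subset_leq_card.
  rewrite ltn_neqAle hle andbT; apply/eqP => e3.
  have eDC : D = C by apply/eqP; rewrite eqEcard hDC hC3 e3.
  case/negP: (hCN i); rewrite -eDC; apply: subset_trans hDN _; exact: subsetDl.
have hk2 : j.+2 <= k.
  case: (Oth j i hjt) => r [hr hri].
  have h2 : 2 <= #|Sv j :\ i|.
    by move: (F1 j hjt); rewrite (cardsD1 i (Sv j)) hij add1n ltnS; apply: leq_trans.
  case: (@pick_other _ _ r h2) => r' []; rewrite !inE => /andP[hr'i hr'] hr'r.
  set B := [set a s r | s : 'I_j.+1].
  have cardB : #|B| = j.+1 by rewrite card_imset ?card_ord //; exact: Inj.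
  have hBN : a j r' |: B \subset N i.
    apply/subsetP => x; rewrite !inE => /orP[/eqP->|/imsetP[s _ ->]].
      by apply: F3 => //; rewrite eq_sym.
    have hs : s <= j by rewrite -ltnS.
    apply: F3; [exact: leq_trans hjt|exact: (subsetP (F0' _ hs))|exact: hAi|by rewrite eq_sym].
  have hnot : a j r' \notin B.
    apply/imsetP => [[s _ e]].
    have hs : s <= j by rewrite -ltnS.
    case: (ltnP s j) => hsj.
      have := F4 s j r r' hsj hjt (subsetP (F0' _ hs) _ hr) hr'.
      by rewrite e eqxx.
    have esj : nat_of_ord s = j by apply/eqP; rewrite eqn_leq hs hsj.
    rewrite esj in e.
    have := F3 j r' r hjt hr' hr (ltac:(by rewrite eq_sym)).
    rewrite e; move: (F2 j r hjt hr) => /negP; done.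
  rewrite -(hcard i); move: (subset_leq_card hBN); rewrite cardsU1 hnot cardB; done.
have hNY : 2 <= #|N i :\: Y|.
  rewrite cardsD (setIidPr hYi) hcard; lia.
case: (ltnP 1 #|D|) => hD.
  exists D; split => //.
    split => //; first lia.
      apply: subset_trans hDN _; exact: subsetDl.
    move=> r hr hri; case: (Claim r hr hri) => x hx hxr; apply/subsetPn; by exists x.
  by left; exists C; split.
have : #|D| == 1 by rewrite eqn_leq hD D0.
case/cards1P => x eD.
have hx : x \in N i :\: Y by apply: (subsetP hDN); rewrite eD set11.
have hxN : x \in N i by move: hx; rewrite inE => /andP[].
have hxpriv : forall r, r \in Sv j -> r != i -> x \notin N r.
  move=> r hr hri; case: (Claim r hr hri) => z; rewrite -/D eD inE => /eqP -> //.
case: (@pick_other _ _ x hNY) => y [hy hyx].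
have hyN : y \in N i by move: hy; rewrite inE => /andP[].
have hpY : [set x; y] \subset N i :\: Y.
  by apply/subsetP => z; rewrite !inE => /orP[/eqP->|/eqP->]; [move: hx|move: hy]; rewrite inE.
exists [set x; y]; split.
- split.
  + by rewrite cards2 eq_sym hyx.
  + apply: subset_trans hpY _; exact: subsetDl.
  + move=> r hr hri; apply/subsetPn; exists x; first by rewrite !inE eqxx.
    exact: (hxpriv r hr hri).
- exact: hpY.
- right; exists x; first by rewrite !inE eqxx.
  split; [exact: hxN | move=> r hr hri; exact: (hxpriv r hr hri)].
Qed.
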